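(* Let $\theta$ be a skew-merged permutation. Then the length of a longest increasing subsequence of $\theta$ equals the number of elements of type SW plus the number of elements of type NE plus the length of a longest increasing subsequence of the set of central elements of $\theta$ (which is the number of central elements if they form an increasing sequence, $1$ if they form a decreasing sequence of length at least one, and $0$ if there are none).
   Context: Permutations are identified with their sets of points $(i,\sigma(i))$ with the usual left/right/above/below relations. A skew-merged permutation is one whose points can be partitioned into an increasing and a decreasing subsequence. An element is of type NE if it plays the $3$ in an occurrence of $213$, NW if it plays the $3$ in an occurrence of $312$, SW if it plays the $1$ in an occurrence of $132$, SE if it plays the $1$ in an occurrence of $231$, and central otherwise. The central elements of a skew-merged permutation form a monotone sequence. *)

(* Defs.v *)
(* A permutation of size n is s : {perm 'I_n}; its points are
   (i, s i).  Element i is "left of" j iff i < j, "below" iff s i < s j. *)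
From mathcomp Require Import all_boot all_fingroup.
Set Implicit Arguments. Unset Strict Implicit. Unset Printing Implicit Defensive.

Section SkewMerged.
Variable n : nat.
Implicit Types (s : {perm 'I_n}) (A S : {set 'I_n}).

Definition incr_on s S : bool :=
  [forall i in S, forall j in S, (i < j) ==> (s i < s j)].
Definition decr_on s S : bool :=
  [forall i in S, forall j in S, (i < j) ==> (s j < s i)].

Definition skew_merged s : Prop :=
  exists A B : {set 'I_n},
    [/\ [disjoint A & B], A :|: B = setT, incr_on s A & decr_on s B].

(* c plays the 3 in an occurrence a<b<c of 213: s b < s a < s c *)
Definition is_NE s (c : 'I_n) : bool :=
  [exists a : 'I_n, exists b : 'I_n,
     [&& a < b, b < c, s b < s a & s a < s c]].
(* a plays the 3 in an occurrence a<b<c of 312: s b < s c < s a *)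
Definition is_NW s (a : 'I_n) : bool :=
  [exists b : 'I_n, exists c : 'I_n,
     [&& a < b, b < c, s b < s c & s c < s a]].
(* a plays the 1 in an occurrence a<b<c of 132: s a < s c < s b *)
Definition is_SW s (a : 'I_n) : bool :=
  [exists b : 'I_n, exists c : 'I_n,
     [&& a < b, b < c, s a < s c & s c < s b]].
(* c plays the 1 in an occurrence a<b<c of 231: s c < s a < s b *)
Definition is_SE s (c : 'I_n) : bool :=
  [exists a : 'I_n, exists b : 'I_n,
     [&& a < b, b < c, s c < s a & s a < s b]].

Definition is_central s (x : 'I_n) : bool :=
  ~~ [|| is_NE s x, is_NW s x, is_SW s x | is_SE s x].

Definition NE_set s := [set x | is_NE s x].
Definition SW_set s := [set x | is_SW s x].
Definition central_set s := [set x | is_central s x].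

Definition lis_on s A : nat :=
  \max_(S : {set 'I_n} | (S \subset A) && incr_on s S) #|S|.

Definition lis s : nat := lis_on s setT.
End SkewMerged.

(* Main.v *)
Require Import Defs.
From mathcomp Require Import zify.
From mathcomp Require Import all_boot all_fingroup.

Set Implicit Arguments. Unset Strict Implicit. Unset Printing Implicit Defensive.

Ltac mlia := repeat match goal with H : is_true ?P |- _ =>
  lazymatch P with leq _ _ => revert H | _ => clear H end end; lia.

Section Proof.
Variable n : nat.
Variable s : {perm 'I_n}.
Variables A B : {set 'I_n}.
Hypothesis hd : [disjoint A & B].
Hypothesis hU : A :|: B = setT.
Hypothesis hA : incr_on s A.
Hypothesis hB : decr_on s B.

Lemma inB x : (x \in B) = (x \notin A).
Proof using All.
have := hd => /disjointFl => h.
case xB: (x \in B).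
  by rewrite (h x xB).
have : x \in A :|: B by rewrite hU inE.
by rewrite inE xB orbF => ->.
Qed.

Lemma incrA x y : x \in A -> y \in A -> x < y -> s x < s y.
Proof using All. by move=> xA yA xy; move/forallP: hA => /(_ x); rewrite xA => /forallP /(_ y); rewrite yA xy. Qed.

Lemma decrB x y : x \in B -> y \in B -> x < y -> s y < s x.
Proof using All. by move=> xA yA xy; move/forallP: hB => /(_ x); rewrite xA => /forallP /(_ y); rewrite yA xy. Qed.

Lemma oneB (a b : 'I_n) : a < b -> s b < s a ->
  exists p : 'I_n, [/\ p \in B, a <= p, p <= b, s b <= s p & s p <= s a].
Proof using All.
move=> ab sab.
case aB: (a \in B); first by exists a; split => //; mlia.
case bB: (b \in B); first by exists b; split => //; mlia.
move: aB bB; rewrite !inB => /negbFE aA /negbFE bA.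
have := incrA aA bA ab; mlia.
Qed.

Lemma oneA (a b : 'I_n) : a < b -> s a < s b ->
  exists p : 'I_n, [/\ p \in A, a <= p, p <= b, s a <= s p & s p <= s b].
Proof using All.
move=> ab sab.
case aB: (a \in A); first by exists a; split => //; mlia.
case bB: (b \in A); first by exists b; split => //; mlia.
have aA : a \in B by rewrite inB aB.
have bA : b \in B by rewrite inB bB.
have := decrB aA bA ab; mlia.
Qed.

Lemma NE_A x : is_NE s x -> x \in A.
Proof using All.
move=> /existsP[a /existsP[b /and4P[h1 h2 h3 h4]]].
case: (oneB h1 h3) => p [pB h5 h6 h7 h8].
case xA: (x \in A) => //.
have xB : x \in B by rewrite inB xA.
have := decrB pB xB (leq_ltn_trans h6 h2); mlia.
Qed.

Lemma SW_A x : is_SW s x -> x \in A.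
Proof using All.
move=> /existsP[b /existsP[c /and4P[h1 h2 h3 h4]]].
case: (oneB h2 h4) => p [pB h5 h6 h7 h8].
case xA: (x \in A) => //.
have xB : x \in B by rewrite inB xA.
have := decrB xB pB (leq_trans h1 h5); mlia.
Qed.

Lemma NW_B x : is_NW s x -> x \notin A.
Proof using All.
move=> /existsP[b /existsP[c /and4P[h1 h2 h3 h4]]].
case: (oneA h2 h3) => p [pA h5 h6 h7 h8].
apply/negP => xA.
have := incrA xA pA (leq_trans h1 h5); mlia.
Qed.

Lemma SE_B x : is_SE s x -> x \notin A.
Proof using All.
move=> /existsP[a /existsP[b /and4P[h1 h2 h3 h4]]].
case: (oneA h1 h4) => p [pA h5 h6 h7 h8].
apply/negP => xA.
have := incrA pA xA (leq_ltn_trans h6 h2); mlia.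
Qed.

Lemma NE_SW x : is_NE s x -> is_SW s x -> False.
Proof using All.
move=> /existsP[a /existsP[b /and4P[h1 h2 h3 h4]]].
move=> /existsP[b' /existsP[c' /and4P[h1' h2' h3' h4']]].
case: (oneB h1 h3) => p [pB h5 h6 h7 h8].
case: (oneB h2' h4') => q [qB h5' h6' h7' h8'].
have pq : p < q by mlia.
have := decrB pB qB pq; mlia.
Qed.

Lemma centralE y : is_central s y ->
  [/\ ~~ is_NE s y, ~~ is_NW s y, ~~ is_SW s y & ~~ is_SE s y].
Proof using All. by rewrite /is_central !negb_or => /and4P. Qed.

Lemma natI (u v : 'I_n) : u <= v -> v <= u -> (s u : nat) = s v.
Proof using All. by move=> h1 h2; have /val_inj -> : (u : nat) = v by apply/eqP; rewrite eqn_leq h1 h2. Qed.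

Lemma mkW (P : 'I_n -> 'I_n -> bool) : forall p q, P p q ->
  [exists a, exists b, P a b].
Proof using All. by move=> p q h; apply/existsP; exists p; apply/existsP; exists q. Qed.

Lemma F2 x y : (is_NE s x || is_SW s x) -> is_central s y ->
  (x < y -> s x < s y) /\ (y < x -> s y < s x).
Proof using All.
move=> hx hy.
have xA : x \in A by case/orP: hx; [apply: NE_A | apply: SW_A].
case yA: (y \in A).
  by split=> h; [apply: incrA | apply: incrA].
have yB : y \in B by rewrite inB yA.
case/centralE: hy => nNE nNW nSW nSE.
case/orP: hx.
- move=> hx; have := hx.
  move=> /existsP[a /existsP[b /and4P[h1 h2 h3 h4]]].
  case: (oneB h1 h3) => p [pB h5 h6 h7 h8].
  split=> h.
  + case: (ltngtP (s x) (s y)) => // h'.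
    * have := decrB pB yB (leq_ltn_trans h6 (ltn_trans h2 h)) => h9.
      exfalso; apply: (negP nSE); apply/existsP; exists p; apply/existsP; exists x; apply/and4P; split; mlia.
    * move: h'.
      by move/val_inj/perm_inj => e; move: h; rewrite e ltnn.
  + case: (ltngtP (s y) (s x)) => // h'.
    * case: (ltnP y b) => h9.
      - exfalso; apply: (negP nNW); apply/existsP; exists b; apply/existsP; exists x; apply/and4P; split; mlia.
      - case: (ltnP p y) => h10; first by have := decrB pB yB h10; mlia.
        have := natI h10 (leq_trans h6 h9); mlia.
    * move: h'.
      by move/val_inj/perm_inj => e; move: h; rewrite e ltnn.
- move=> hx; have := hx.
  move=> /existsP[b /existsP[c /and4P[h1 h2 h3 h4]]].
  case: (oneB h2 h4) => q [qB h5 h6 h7 h8].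
  split=> h.
  + case: (ltngtP (s x) (s y)) => // h'.
    * case: (ltnP b y) => h9.
      - exfalso; apply: (negP nSE); apply/existsP; exists x; apply/existsP; exists b; apply/and4P; split; mlia.
      - case: (ltnP y q) => h10; first by have := decrB yB qB h10; mlia.
        have := natI (leq_trans h9 h5) h10; mlia.
    * move: h'.
      by move/val_inj/perm_inj => e; move: h; rewrite e ltnn.
  + case: (ltngtP (s y) (s x)) => // h'.
    * have := decrB yB qB (ltn_trans h (leq_trans h1 h5)) => h9.
      exfalso; apply: (negP nNW); apply/existsP; exists x; apply/existsP; exists q; apply/and4P; split; mlia.
    * move: h'.
      by move/val_inj/perm_inj => e; move: h; rewrite e ltnn.
Qed.

Lemma sel_S (z : 'I_n) (S : {set 'I_n}) : incr_on s S -> z \in S -> z \notin A ->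
  forall x, x \in S -> x != z -> x \in A.
Proof using All.
move=> hS zS zA x xS xz.
case xA: (x \in A) => //.
have xB : x \in B by rewrite inB xA.
have zB : z \in B by rewrite inB.
have hS' : forall i j, i \in S -> j \in S -> i < j -> s i < s j.
  by move=> i j iS jS ij; move/forallP: hS => /(_ i); rewrite iS => /forallP /(_ j); rewrite jS ij.
case: (ltngtP x z) => h.
- have := hS' _ _ xS zS h; have := decrB xB zB h; mlia.
- have := hS' _ _ zS xS h; have := decrB zB xB h; mlia.
- by move/val_inj: h => h; rewrite h eqxx in xz.
Qed.

Lemma find_w (z : 'I_n) : is_NW s z || is_SE s z ->
  exists w : 'I_n, [/\ w \in A & ((z < w) && (s w < s z)) || ((w < z) && (s z < s w))].
Proof using All.
case/orP.
- move=> /existsP[b /existsP[c /and4P[h1 h2 h3 h4]]].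
  case: (oneA h2 h3) => p [pA h5 h6 h7 h8].
  exists p; split => //; apply/orP; left; apply/andP; split; mlia.
- move=> /existsP[a /existsP[b /and4P[h1 h2 h3 h4]]].
  case: (oneA h1 h4) => p [pA h5 h6 h7 h8].
  exists p; split => //; apply/orP; right; apply/andP; split; mlia.
Qed.

End Proof.

Lemma incrS n (s : {perm 'I_n}) (S : {set 'I_n}) i j :
  incr_on s S -> i \in S -> j \in S -> i < j -> s i < s j.
Proof. by move=> hS iS jS ij; move/forallP: hS => /(_ i); rewrite iS => /forallP /(_ j); rewrite jS ij. Qed.

Lemma incr_sub n (s : {perm 'I_n}) (S T : {set 'I_n}) :
  T \subset S -> incr_on s S -> incr_on s T.
Proof.
move=> /subsetP TS hS; apply/forallP => i; apply/implyP => iT; apply/forallP => j;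
apply/implyP => jT; apply/implyP; exact: incrS hS (TS _ iT) (TS _ jT).
Qed.

Lemma cardU_le (T : finType) (X Y : {set T}) : #|X :|: Y| <= #|X| + #|Y|.
Proof. by rewrite cardsU leq_subr. Qed.

Lemma bound n (s : {perm 'I_n}) (S : {set 'I_n}) : incr_on s S ->
  (forall x, x \in S -> ~~ is_NW s x && ~~ is_SE s x) ->
  #|S| <= #|SW_set s| + #|NE_set s| + lis_on s (central_set s).
Proof.
move=> hS hx.
have sub : S \subset SW_set s :|: NE_set s :|: (S :&: central_set s).
  apply/subsetP => x xS; rewrite !inE xS /=.
  case/andP: (hx x xS) => h1 h2.
  rewrite /is_central (negbTE h1) (negbTE h2).
  by case: (is_SW s x); case: (is_NE s x).
apply: leq_trans (subset_leq_card sub) _.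
apply: leq_trans (cardU_le _ _) _.
rewrite leq_add // ?cardU_le //.
rewrite /lis_on; apply: leq_bigmax_cond.
rewrite subsetIr /=; apply: incr_sub hS; exact: subsetIl.
Qed.

Theorem mainTheorem11 (n : nat) (s : {perm 'I_n}) :
  skew_merged s ->
  lis s = #|SW_set s| + #|NE_set s| + lis_on s (central_set s).
Proof.
case=> A [B [hd hU hA hB]].
apply/eqP; rewrite eqn_leq; apply/andP; split.
- rewrite /lis /lis_on; apply/bigmax_leqP => S /andP[_ hS].
  case: (boolP [exists z in S, is_NW s z || is_SE s z]).
  + case/exists_inP => z zS hz.
    have zA : z \notin A.
      by case/orP: hz; [apply: (NW_B hd hU hA hB) | apply: (SE_B hd hU hA hB)].
    case: (find_w hd hU hA hB hz) => w [wA hw].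
    have wS : w \notin S.
      apply/negP => wS; case/orP: hw => /andP[h1 h2].
      * have := incrS hS zS wS h1; mlia.
      * have := incrS hS wS zS h1; mlia.
    have wz : w != z by apply/negP => /eqP e; rewrite -e wA in zA.
    pose S' := w |: (S :\ z).
    have S'A : S' \subset A.
      apply/subsetP => x; rewrite !inE => /orP[/eqP -> //|/andP[xz xS]].
      exact: (sel_S hd hU hA hB hS zS zA xS xz).
    have -> : #|S| = #|S'|.
      by rewrite /S' cardsU1 inE negb_and wS orbT (cardsD1 z S) zS.
    apply: bound; first exact: incr_sub S'A hA.
    move=> x /(subsetP S'A) xA; apply/andP; split; apply/negP => h.
    * by have := NW_B hd hU hA hB h; rewrite xA.
    * by have := SE_B hd hU hA hB h; rewrite xA.
  + rewrite negb_exists_in => /forall_inP hn.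
    apply: bound => // x xS; have := hn x xS; by rewrite negb_or.
- set C := central_set s.
  have P0 : (set0 \subset C) && incr_on s set0.
    by rewrite sub0set; apply/forallP => i; rewrite inE.
  have [T /andP[TC Tinc] eqT] : exists2 T : {set 'I_n},
      (T \subset C) && incr_on s T & lis_on s C = #|T|.
    exists [arg max_(T > set0 | (T \subset C) && incr_on s T) #|T|].
      by case: arg_maxnP.
    by rewrite /lis_on (bigmax_eq_arg set0 P0).
  rewrite eqT.
  pose P := SW_set s :|: NE_set s :|: T.
  have cP : #|P| = #|SW_set s| + #|NE_set s| + #|T|.
    rewrite /P cardsU (cardsU (SW_set s)).
    have -> : SW_set s :&: NE_set s = set0.
      apply/setP => x; rewrite !inE; apply/negbTE/negP => /andP[h1 h2].
      exact: (NE_SW hd hU hA hB h2 h1).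
    have -> : (SW_set s :|: NE_set s) :&: T = set0.
      apply/setP => x; rewrite !inE; apply/negbTE/negP => /andP[h1 /(subsetP TC) h2].
      by case/orP: h1 => h; move: h2; rewrite inE /is_central h ?orbT.
    by rewrite !cards0 !subn0.
  rewrite -cP /lis /lis_on; apply: leq_bigmax_cond.
  rewrite subsetT /=.
  have inSN : forall x, x \in SW_set s :|: NE_set s -> (is_NE s x || is_SW s x) /\ x \in A.
    move=> x; rewrite !inE => h; split; first by rewrite orbC.
    by case/orP: h => h; [apply: (SW_A hd hU hA hB) | apply: (NE_A hd hU hA hB)].
  have TCc : forall x, x \in T -> is_central s x.
    by move=> x /(subsetP TC); rewrite inE.
  apply/forallP => i; apply/implyP => iP; apply/forallP => j; apply/implyP => jP;
  apply/implyP => ij.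
  move: iP jP; rewrite /P in_setU => /orP[iSN|iT]; rewrite in_setU => /orP[jSN|jT].
  + case: (inSN _ iSN) => _ iA; case: (inSN _ jSN) => _ jA; exact: (incrA hd hU hA hB iA jA ij).
  + case: (inSN _ iSN) => hi _.
    exact: (F2 hd hU hA hB hi (TCc _ jT)).1 ij.
  + case: (inSN _ jSN) => hj _.
    exact: (F2 hd hU hA hB hj (TCc _ iT)).2 ij.
  + exact: incrS Tinc iT jT ij.
Qed.
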